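(* Let $\triangle ABC$ be a nondegenerate triangle with circumradius $R$, circumscribed about a central conic with linear eccentricity $c$ (half the distance between the foci). (a) If the circumcenter of $\triangle ABC$ coincides with the center of the conic, then $3R^2>c^2$. (b) If the circumcenter of $\triangle ABC$ coincides with a focus of the conic, then $3R>2c$.
   Context: A central conic is a non-degenerate ellipse or hyperbola. A triangle is circumscribed about a conic if each of its three sidelines is tangent to the conic. *)

(* Defs.v *)
From HB Require Import structures.
From mathcomp Require Import all_boot all_order all_algebra.
From mathcomp Require Import reals.
Set Implicit Arguments. Unset Strict Implicit. Unset Printing Implicit Defensive.
Import Order.TTheory GRing.Theory Num.Theory.
Local Open Scope ring_scope.

Section Plane.
Variable R : realType.
Definition point := (R * R)%type.

Definition psub (p q : point) : point := (p.1 - q.1, p.2 - q.2).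
Definition padd (p q : point) : point := (p.1 + q.1, p.2 + q.2).
Definition pscale (k : R) (p : point) : point := (k * p.1, k * p.2).
Definition dot (p q : point) : R := p.1 * q.1 + p.2 * q.2.
Definition norm2 (p : point) : R := dot p p.
Definition perp (p : point) : point := (- p.2, p.1).
Definition dist (p q : point) : R := Num.sqrt (norm2 (psub p q)).

Definition nondegenerate_triangle (A B C : point) : Prop :=
  let u := psub B A in let v := psub C A in u.1 * v.2 - u.2 * v.1 != 0.

Definition is_circumcenter (O A B C : point) : Prop :=
  dist O A = dist O B /\ dist O B = dist O C.

(* A central conic, given in its own orthonormal frame:
   centre [ctr], unit axis direction [ax] (second axis = perp ax),
   semi-axes [sa], [sb] > 0; [hyp = false]: ellipse x^2/a^2 + y^2/b^2 = 1,
   [hyp = true]: hyperbola x^2/a^2 - y^2/b^2 = 1, where x, y are the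
   coordinates of X - ctr along ax and perp ax. *)
Record central_conic := CentralConic {
  ctr : point; ax : point; sa : R; sb : R; hyp : bool }.

Definition wf_conic (K : central_conic) : Prop :=
  norm2 (ax K) = 1 /\ 0 < sa K /\ 0 < sb K.

Definition sgn (K : central_conic) : R := if hyp K then -1 else 1.

Definition xc (K : central_conic) (X : point) : R := dot (psub X (ctr K)) (ax K).
Definition yc (K : central_conic) (X : point) : R := dot (psub X (ctr K)) (perp (ax K)).

Definition on_conic (K : central_conic) (X : point) : Prop :=
  (xc K X) ^+ 2 / (sa K) ^+ 2 + sgn K * (yc K X) ^+ 2 / (sb K) ^+ 2 = 1.

(* The line through P and Q (P <> Q) is tangent to K: restricting the conic
   equation to the line P + t (Q - P) gives a genuine quadratic in t
   (leading coefficient nonzero) with a double root. *)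
Definition tangent_line (K : central_conic) (P Q : point) : Prop :=
  let d := psub Q P in
  let dx := dot d (ax K) in let dy := dot d (perp (ax K)) in
  let px := xc K P in let py := yc K P in
  let a2 := (sa K) ^+ 2 in let b2 := (sb K) ^+ 2 in
  let al := dx ^+ 2 / a2 + sgn K * dy ^+ 2 / b2 in
  let be := 2 * (px * dx / a2 + sgn K * py * dy / b2) in
  let ga := px ^+ 2 / a2 + sgn K * py ^+ 2 / b2 - 1 in
  al != 0 /\ be ^+ 2 = 4 * al * ga.

Definition lin_ecc (K : central_conic) : R :=
  if hyp K then Num.sqrt ((sa K) ^+ 2 + (sb K) ^+ 2)
  else Num.sqrt `|(sa K) ^+ 2 - (sb K) ^+ 2|.

(* the foci: ctr +- c * (direction of the focal (major / transverse) axis) *)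
Definition focal_dir (K : central_conic) : point :=
  if hyp K || (sb K <= sa K) then ax K else perp (ax K).

Definition is_focus (K : central_conic) (F : point) : Prop :=
  F = padd (ctr K) (pscale (lin_ecc K) (focal_dir K)) \/
  F = padd (ctr K) (pscale (- lin_ecc K) (focal_dir K)).

Definition circumscribed (K : central_conic) (A B C : point) : Prop :=
  tangent_line K B C /\ tangent_line K C A /\ tangent_line K A B.

End Plane.

(* Main.v *)
Require Import Defs.
From HB Require Import structures.
From mathcomp Require Import all_boot all_order all_algebra.
From mathcomp Require Import reals ring lra.
Import Order.TTheory GRing.Theory Num.Theory.
Local Open Scope ring_scope.
Set Implicit Arguments. Unset Strict Implicit.
Lemma sqr_gt0' (R : realType) (x : R) : x != 0 -> 0 < x ^+ 2.
Proof. by move=> h; rewrite lt0r sqrf_eq0 h sqr_ge0. Qed.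

Lemma bilin (R : realType) (al be x1 y1 x2 y2 r : R) :
  x1 ^+ 2 + y1 ^+ 2 = r -> x2 ^+ 2 + y2 ^+ 2 = r ->
  be * (x1 - x2) ^+ 2 + al * (y1 - y2) ^+ 2 = (x1 * y2 - x2 * y1) ^+ 2 ->
  x1 * y2 - x2 * y1 != 0 ->
  (r - (al - be)) * x1 * x2 + (r + (al - be)) * y1 * y2 = r * ((al + be) - r).
Proof.
move=> h1 h2 hT hc.
have E : 2 * (r - (x1 * x2 + y1 * y2)) *
   ((r - (al - be)) * x1 * x2 + (r + (al - be)) * y1 * y2 - r * ((al + be) - r)) =
   - 2 * r * (be * (x1 - x2) ^+ 2 + al * (y1 - y2) ^+ 2 - (x1 * y2 - x2 * y1) ^+ 2)
   + r * (al + be) * ((x1 ^+ 2 + y1 ^+ 2 - r) + (x2 ^+ 2 + y2 ^+ 2 - r))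
   - 2 * r * ((x1 ^+ 2 + y1 ^+ 2 - r) * (x2 ^+ 2 + y2 ^+ 2) + r * (x2 ^+ 2 + y2 ^+ 2 - r))
   + (al - be) * ((x2 ^+ 2 + y2 ^+ 2 - r) * (x1 ^+ 2 - y1 ^+ 2)
                 + (x1 ^+ 2 + y1 ^+ 2 - r) * (x2 ^+ 2 - y2 ^+ 2)).
  by ring.
rewrite hT h1 h2 !subrr in E.
have Lg : r * r = (x1 * y2 - x2 * y1) ^+ 2 + (x1 * x2 + y1 * y2) ^+ 2.
  by rewrite -{1}h1 -h2; ring.
have hc2 := sqr_gt0' hc.
have hg : r - (x1 * x2 + y1 * y2) != 0.
  apply/eqP => e.
  have eg : x1 * x2 + y1 * y2 = r by lra.
  rewrite eg in Lg. nra.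
apply/eqP; rewrite -subr_eq0; apply/eqP.
have : 2 * (r - (x1 * x2 + y1 * y2)) *
   ((r - (al - be)) * x1 * x2 + (r + (al - be)) * y1 * y2 - r * ((al + be) - r)) = 0.
  by rewrite E; ring.
move/eqP; rewrite mulf_eq0 mulf_eq0 (negbTE hg) orbF => /orP [|/eqP //].
by rewrite pnatr_eq0.
Qed.

Lemma elimA (R : realType) (x1 y1 x2 y2 x3 y3 m1 m2 k r : R) :
  m1 * x2 * x3 + m2 * y2 * y3 = k ->
  m1 * x3 * x1 + m2 * y3 * y1 = k ->
  m1 * x1 * x2 + m2 * y1 * y2 = k ->
  x1 ^+ 2 + y1 ^+ 2 = r -> x2 ^+ 2 + y2 ^+ 2 = r -> x3 ^+ 2 + y3 ^+ 2 = r ->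
  ((x2 - x1) * (y3 - y1) - (y2 - y1) * (x3 - x1)) ^+ 2 * (k * (m1 + m2) + r * m1 * m2) = 0.
Proof.
move=> h23 h31 h12 h1 h2 h3.
have E : ((x2 - x1) * (y3 - y1) - (y2 - y1) * (x3 - x1)) ^+ 2 * (k * (m1 + m2) + r * m1 * m2)
  = - (((m1 * x2 * x2 + m2 * y2 * y2 - k) * (m1 * x3 * x3 + m2 * y3 * y3 - k) - (m1 * x2 * x3 + m2 * y2 * y3 - k) ^+ 2) * (x1 ^+ 2 + y1 ^+ 2 - r)
   + ((m1 * x1 * x1 + m2 * y1 * y1 - k) * (m1 * x3 * x3 + m2 * y3 * y3 - k) - (m1 * x3 * x1 + m2 * y3 * y1 - k) ^+ 2) * (x2 ^+ 2 + y2 ^+ 2 - r)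
   + ((m1 * x1 * x1 + m2 * y1 * y1 - k) * (m1 * x2 * x2 + m2 * y2 * y2 - k) - (m1 * x1 * x2 + m2 * y1 * y2 - k) ^+ 2) * (x3 ^+ 2 + y3 ^+ 2 - r)
   + 2 * (((m1 * x3 * x1 + m2 * y3 * y1 - k) * (m1 * x2 * x3 + m2 * y2 * y3 - k)
           - (m1 * x1 * x2 + m2 * y1 * y2 - k) * (m1 * x3 * x3 + m2 * y3 * y3 - k)) * (x1 * x2 + y1 * y2 - r)
        + ((m1 * x1 * x2 + m2 * y1 * y2 - k) * (m1 * x2 * x3 + m2 * y2 * y3 - k)
           - (m1 * x3 * x1 + m2 * y3 * y1 - k) * (m1 * x2 * x2 + m2 * y2 * y2 - k)) * (x3 * x1 + y3 * y1 - r)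
        + ((m1 * x1 * x2 + m2 * y1 * y2 - k) * (m1 * x3 * x1 + m2 * y3 * y1 - k)
           - (m1 * x1 * x1 + m2 * y1 * y1 - k) * (m1 * x2 * x3 + m2 * y2 * y3 - k)) * (x2 * x3 + y2 * y3 - r))).
 by ring.
by rewrite E h23 h31 h12 h1 h2 h3; ring.
Qed.

Lemma sumsq_pos (R : realType) (xi yi xj yj : R) :
  xi * yj - xj * yi != 0 -> 0 < (xi - xj) ^+ 2 + (yi - yj) ^+ 2.
Proof.
move=> hc; have c2 := sqr_gt0' hc.
have id : (xi ^+ 2 + yi ^+ 2) * ((xi - xj) ^+ 2 + (yi - yj) ^+ 2) =
  (xi * yj - xj * yi) ^+ 2 + (xi * (xi - xj) + yi * (yi - yj)) ^+ 2 by ring.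
have hs : 0 <= (xi * (xi - xj) + yi * (yi - yj)) ^+ 2 by apply: sqr_ge0.
rewrite lt0r addr_ge0 ?sqr_ge0 // andbT; apply/eqP => e.
rewrite e mulr0 in id. lra.
Qed.

Lemma coreA (R : realType) (al be r x1 y1 x2 y2 x3 y3 : R) :
  be * (x2 - x3) ^+ 2 + al * (y2 - y3) ^+ 2 = (x2 * y3 - x3 * y2) ^+ 2 ->
  be * (x3 - x1) ^+ 2 + al * (y3 - y1) ^+ 2 = (x3 * y1 - x1 * y3) ^+ 2 ->
  be * (x1 - x2) ^+ 2 + al * (y1 - y2) ^+ 2 = (x1 * y2 - x2 * y1) ^+ 2 ->
  x2 * y3 - x3 * y2 != 0 -> x3 * y1 - x1 * y3 != 0 -> x1 * y2 - x2 * y1 != 0 ->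
  (x2 - x1) * (y3 - y1) - (y2 - y1) * (x3 - x1) != 0 ->
  x1 ^+ 2 + y1 ^+ 2 = r -> x2 ^+ 2 + y2 ^+ 2 = r -> x3 ^+ 2 + y3 ^+ 2 = r ->
  r ^+ 2 - 2 * r * (al + be) + (al - be) ^+ 2 = 0.
Proof.
move=> t23 t31 t12 c23 c31 c12 hD h1 h2 h3.
have b23 := bilin h2 h3 t23 c23.
have b31 := bilin h3 h1 t31 c31.
have b12 := bilin h1 h2 t12 c12.
have := elimA b23 b31 b12 h1 h2 h3.
move/eqP; rewrite mulf_eq0 sqrf_eq0 (negbTE hD) /= => /eqP E.
have Lg : r * r = (x1 * y2 - x2 * y1) ^+ 2 + (x1 * x2 + y1 * y2) ^+ 2.
  by rewrite -{1}h1 -h2; ring.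
have c2 := sqr_gt0' c12.
have hg : 0 <= (x1 * x2 + y1 * y2) ^+ 2 by apply: sqr_ge0.
have r0 : r != 0 by apply/eqP => e; rewrite e mul0r in Lg; lra.
have E2 : r * (r ^+ 2 - 2 * r * (al + be) + (al - be) ^+ 2) = 0.
  by rewrite -[RHS]oppr0 -E; ring.
by move/eqP: E2; rewrite mulf_eq0 (negbTE r0) /= => /eqP.
Qed.

Lemma midB (R : realType) (al be f r xi yi xj yj : R) :
  f ^+ 2 = al - be -> (f - xi) ^+ 2 + yi ^+ 2 = r -> (f - xj) ^+ 2 + yj ^+ 2 = r ->
  be * (xi - xj) ^+ 2 + al * (yi - yj) ^+ 2 = (xi * yj - xj * yi) ^+ 2 ->
  xi * yj - xj * yi != 0 ->
  (xi + xj) ^+ 2 + (yi + yj) ^+ 2 = 4 * al.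
Proof.
move=> hf hi hj hT hc.
have E : ((xi + xj) ^+ 2 + (yi + yj) ^+ 2 - 4 * al) * ((xi - xj) ^+ 2 + (yi - yj) ^+ 2) =
  4 * ((xi * yj - xj * yi) ^+ 2 - (be * (xi - xj) ^+ 2 + al * (yi - yj) ^+ 2))
  + 4 * (xj - xi) ^+ 2 * (f ^+ 2 - (al - be))
  + (((f - xj) ^+ 2 + yj ^+ 2) - ((f - xi) ^+ 2 + yi ^+ 2)) *
    ((xi + xj) * (xj - xi) + (yi + yj) * (yj - yi) + 2 * f * (xj - xi)).
  by ring.
rewrite hT hf hi hj !subrr in E.
have hd := sumsq_pos hc.
apply/eqP; rewrite -subr_eq0; apply/eqP.
have : ((xi + xj) ^+ 2 + (yi + yj) ^+ 2 - 4 * al) * ((xi - xj) ^+ 2 + (yi - yj) ^+ 2) = 0.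
  by rewrite E; ring.
by move/eqP; rewrite mulf_eq0 (negbTE (lt0r_neq0 hd)) orbF => /eqP.
Qed.

Lemma coreB (R : realType) (al be f r x1 y1 x2 y2 x3 y3 : R) :
  f ^+ 2 = al - be ->
  be * (x2 - x3) ^+ 2 + al * (y2 - y3) ^+ 2 = (x2 * y3 - x3 * y2) ^+ 2 ->
  be * (x3 - x1) ^+ 2 + al * (y3 - y1) ^+ 2 = (x3 * y1 - x1 * y3) ^+ 2 ->
  be * (x1 - x2) ^+ 2 + al * (y1 - y2) ^+ 2 = (x1 * y2 - x2 * y1) ^+ 2 ->
  x2 * y3 - x3 * y2 != 0 -> x3 * y1 - x1 * y3 != 0 -> x1 * y2 - x2 * y1 != 0 ->
  (x2 - x1) * (y3 - y1) - (y2 - y1) * (x3 - x1) != 0 ->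
  (f - x1) ^+ 2 + y1 ^+ 2 = r -> (f - x2) ^+ 2 + y2 ^+ 2 = r -> (f - x3) ^+ 2 + y3 ^+ 2 = r ->
  4 * f ^+ 2 < 9 * r.
Proof.
move=> hf t23 t31 t12 c23 c31 c12 hD h1 h2 h3.
have m23 := midB hf h2 h3 t23 c23.
have m31 := midB hf h3 h1 t31 c31.
have m12 := midB hf h1 h2 t12 c12.
pose v1 := x1 + x2 + x3 - f.
pose v2 := y1 + y2 + y3.
have L1 : 2 * (v1 * (x1 - x2) + v2 * (y1 - y2)) =
   ((x3 + x1) ^+ 2 + (y3 + y1) ^+ 2) - ((x2 + x3) ^+ 2 + (y2 + y3) ^+ 2)
   + ((f - x1) ^+ 2 + y1 ^+ 2) - ((f - x2) ^+ 2 + y2 ^+ 2).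
  by rewrite /v1 /v2; ring.
have L2 : 2 * (v1 * (x1 - x3) + v2 * (y1 - y3)) =
   ((x1 + x2) ^+ 2 + (y1 + y2) ^+ 2) - ((x2 + x3) ^+ 2 + (y2 + y3) ^+ 2)
   + ((f - x1) ^+ 2 + y1 ^+ 2) - ((f - x3) ^+ 2 + y3 ^+ 2).
  by rewrite /v1 /v2; ring.
rewrite m23 m31 m12 h1 h2 h3 in L1 L2.
have V1 : v1 * ((x2 - x1) * (y3 - y1) - (y2 - y1) * (x3 - x1)) = 0.
  have -> : v1 * ((x2 - x1) * (y3 - y1) - (y2 - y1) * (x3 - x1)) =
    ((y1 - y3) * (2 * (v1 * (x1 - x2) + v2 * (y1 - y2)))
     - (y1 - y2) * (2 * (v1 * (x1 - x3) + v2 * (y1 - y3)))) / 2 by field.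
  by rewrite L1 L2; ring.
have V2 : v2 * ((x2 - x1) * (y3 - y1) - (y2 - y1) * (x3 - x1)) = 0.
  have -> : v2 * ((x2 - x1) * (y3 - y1) - (y2 - y1) * (x3 - x1)) =
    ((x1 - x2) * (2 * (v1 * (x1 - x3) + v2 * (y1 - y3)))
     - (x1 - x3) * (2 * (v1 * (x1 - x2) + v2 * (y1 - y2)))) / 2 by field.
  by rewrite L1 L2; ring.
move/eqP: V1; rewrite mulf_eq0 (negbTE hD) orbF => /eqP V1.
move/eqP: V2; rewrite mulf_eq0 (negbTE hD) orbF => /eqP V2.
have E : (v1 - 2 * f) ^+ 2 + v2 ^+ 2 + (((x1 - x2) ^+ 2 + (y1 - y2) ^+ 2)
   + ((x1 - x3) ^+ 2 + (y1 - y3) ^+ 2) + ((x2 - x3) ^+ 2 + (y2 - y3) ^+ 2)) =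
   3 * (((f - x1) ^+ 2 + y1 ^+ 2) + ((f - x2) ^+ 2 + y2 ^+ 2) + ((f - x3) ^+ 2 + y3 ^+ 2)).
  by rewrite /v1 /v2; ring.
rewrite V1 V2 h1 h2 h3 in E.
have p12 := sumsq_pos c12.
have p13 : 0 <= (x1 - x3) ^+ 2 + (y1 - y3) ^+ 2 by rewrite addr_ge0 ?sqr_ge0.
have p23 : 0 <= (x2 - x3) ^+ 2 + (y2 - y3) ^+ 2 by rewrite addr_ge0 ?sqr_ge0.
have : (0 - 2 * f) ^+ 2 = 4 * f ^+ 2 by ring.
lra.
Qed.

Lemma ellA (R : realType) (al be r x1 y1 x2 y2 : R) : 0 < al -> 0 < be -> be <= al ->
  r ^+ 2 - 2 * r * (al + be) + (al - be) ^+ 2 = 0 ->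
  x1 ^+ 2 + y1 ^+ 2 = r -> x2 ^+ 2 + y2 ^+ 2 = r ->
  al * be <= be * x1 ^+ 2 + al * y1 ^+ 2 -> al * be <= be * x2 ^+ 2 + al * y2 ^+ 2 ->
  x1 * y2 - x2 * y1 != 0 -> al - be < 3 * r.
Proof.
move=> ha hb hba E h1 h2 o1 o2 hc.
rewrite ltNge; apply/negP => H.
have sx1 : 0 <= x1 ^+ 2 by apply: sqr_ge0.
have sx2 : 0 <= x2 ^+ 2 by apply: sqr_ge0.
have sy1 : 0 <= y1 ^+ 2 by apply: sqr_ge0.
have sy2 : 0 <= y2 ^+ 2 by apply: sqr_ge0.
have t1 : 0 <= (al - be) * x1 ^+ 2 by apply: mulr_ge0; lra.
have u1 : al * be <= al * r.
  have : be * x1 ^+ 2 + al * y1 ^+ 2 = al * r - (al - be) * x1 ^+ 2.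
    by rewrite -h1; ring.
  lra.
have rb : be <= r by rewrite -(ler_pM2l ha).
have r0 : 0 < r by lra.
have F : (al - be - 3 * r) * (al - be + r) = 4 * r * (be - r).
  have : (al - be - 3 * r) * (al - be + r) - 4 * r * (be - r) =
      r ^+ 2 - 2 * r * (al + be) + (al - be) ^+ 2 by ring.
  by rewrite E => /eqP; rewrite subr_eq0 => /eqP.
have G1 : 0 <= (al - be - 3 * r) * (al - be + r) by apply: mulr_ge0; lra.
have G2 : 0 <= r * (r - be) by apply: mulr_ge0; lra.
have : r * (be - r) = 0 by lra.
move/eqP; rewrite mulf_eq0 (negbTE (lt0r_neq0 r0)) /= subr_eq0 => /eqP ber.
have : (al - be - 3 * r) * (al - be + r) = 0 by lra.
move/eqP; rewrite mulf_eq0 => /orP [/eqP ad|/eqP]; last by lra.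
have al4 : al = 4 * r by lra.
rewrite ber al4 in o1 o2.
have q1 : r * r <= r * y1 ^+ 2.
  have : r * x1 ^+ 2 + 4 * r * y1 ^+ 2 = r * r + 3 * (r * y1 ^+ 2).
    by rewrite -{3}h1; ring.
  lra.
have q2 : r * r <= r * y2 ^+ 2.
  have : r * x2 ^+ 2 + 4 * r * y2 ^+ 2 = r * r + 3 * (r * y2 ^+ 2).
    by rewrite -{3}h2; ring.
  lra.
rewrite ler_pM2l // in q1; rewrite ler_pM2l // in q2.
have z1 : x1 ^+ 2 = 0 by lra.
have z2 : x2 ^+ 2 = 0 by lra.
move/eqP: z1; rewrite sqrf_eq0 => /eqP z1.
move/eqP: z2; rewrite sqrf_eq0 => /eqP z2.
by move: hc; rewrite z1 z2 !mul0r subrr eqxx.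
Qed.
Lemma tan_alg (R : realType) (a2 b2 s px py qx qy : R) : 0 < a2 -> 0 < b2 -> (s = 1 \/ s = -1) ->
 (qx - px) ^+ 2 / a2 + s * (qy - py) ^+ 2 / b2 != 0 ->
 (2 * (px * (qx - px) / a2 + s * py * (qy - py) / b2)) ^+ 2 =
   4 * ((qx - px) ^+ 2 / a2 + s * (qy - py) ^+ 2 / b2) * (px ^+ 2 / a2 + s * py ^+ 2 / b2 - 1) ->
 (s * b2) * (px - qx) ^+ 2 + a2 * (py - qy) ^+ 2 = (px * qy - qx * py) ^+ 2 /\
 px * qy - qx * py != 0 /\
 (s = 1 -> a2 * b2 <= b2 * px ^+ 2 + a2 * py ^+ 2).
Proof.
move=> ha hb hs hal hbe.
have a0 : a2 != 0 by rewrite lt0r_neq0.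
have b0 : b2 != 0 by rewrite lt0r_neq0.
have sb0 : s * b2 != 0 by case: hs => ->; rewrite ?mul1r ?mulN1r ?oppr_eq0.
have hs0 : s != 0 by case: hs => ->; rewrite ?oppr_eq0 oner_eq0.
have s2 : s * s = 1 by case: hs => ->; rewrite ?mulr1 ?mulrNN ?mulr1.
have sinv : s / b2 = 1 / (s * b2).
  by case: hs => ->; field; rewrite ?mulN1r ?mul1r ?oppr_eq0 b0.
have Kal : (qx - px) ^+ 2 / a2 + s * (qy - py) ^+ 2 / b2 =
   ((s * b2) * (px - qx) ^+ 2 + a2 * (py - qy) ^+ 2) / (a2 * (s * b2)).
  by case: hs sb0 => -> sb0; field; rewrite ?a0 ?b0 ?sb0.
have Kbe : (2 * (px * (qx - px) / a2 + s * py * (qy - py) / b2)) ^+ 2 -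
   4 * ((qx - px) ^+ 2 / a2 + s * (qy - py) ^+ 2 / b2) * (px ^+ 2 / a2 + s * py ^+ 2 / b2 - 1) =
   4 * ((s * b2) * (px - qx) ^+ 2 + a2 * (py - qy) ^+ 2 - (px * qy - qx * py) ^+ 2) / (a2 * (s * b2)).
  by case: hs sb0 => -> sb0; field; rewrite ?a0 ?b0 ?sb0.
have E1 : (s * b2) * (px - qx) ^+ 2 + a2 * (py - qy) ^+ 2 = (px * qy - qx * py) ^+ 2.
  apply/eqP; rewrite -subr_eq0; apply/eqP.
  set X := _ - _ ^+ 2.
  have -> : X = (4 * X / (a2 * (s * b2))) * (a2 * (s * b2)) / 4.
    by field; rewrite a0 b0 hs0.
  by rewrite -Kbe hbe subrr !mul0r.
split => //; split.
  by apply: contra hal => /eqP c0; rewrite Kal E1 c0 expr0n /= mul0r.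
move=> s1; move: hal hbe; rewrite s1 !mul1r => hal hbe.
have al0 : 0 < (qx - px) ^+ 2 / a2 + (qy - py) ^+ 2 / b2.
  by rewrite lt0r hal addr_ge0 // divr_ge0 ?sqr_ge0 // ltW.
have ga0 : 0 <= px ^+ 2 / a2 + py ^+ 2 / b2 - 1.
  have : 0 <= 4 * ((qx - px) ^+ 2 / a2 + (qy - py) ^+ 2 / b2) * (px ^+ 2 / a2 + py ^+ 2 / b2 - 1).
    by rewrite -hbe sqr_ge0.
  by rewrite pmulr_rge0 // mulr_gt0.
have : px ^+ 2 / a2 + py ^+ 2 / b2 - 1 = (b2 * px ^+ 2 + a2 * py ^+ 2 - a2 * b2) / (a2 * b2).
  by field; rewrite a0 b0.
move=> e; rewrite e in ga0.
rewrite -subr_ge0; move: ga0; rewrite pmulr_lge0 // invr_gt0 mulr_gt0 //.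
Qed.

Lemma dot_ax (R : realType) (K : central_conic R) (P Q : point R) :
  dot (psub Q P) (ax K) = xc K Q - xc K P.
Proof. by rewrite /xc /dot /psub /=; ring. Qed.

Lemma dot_pax (R : realType) (K : central_conic R) (P Q : point R) :
  dot (psub Q P) (perp (ax K)) = yc K Q - yc K P.
Proof. by rewrite /yc /dot /psub /perp /=; ring. Qed.

Lemma tangent_unpack (R : realType) (K : central_conic R) (P Q : point R) :
  wf_conic K -> tangent_line K P Q ->
  (sgn K * sb K ^+ 2) * (xc K P - xc K Q) ^+ 2 + sa K ^+ 2 * (yc K P - yc K Q) ^+ 2
    = (xc K P * yc K Q - xc K Q * yc K P) ^+ 2 /\
  xc K P * yc K Q - xc K Q * yc K P != 0 /\
  (hyp K = false -> sa K ^+ 2 * sb K ^+ 2 <= sb K ^+ 2 * xc K P ^+ 2 + sa K ^+ 2 * yc K P ^+ 2).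
Proof.
move=> [_ [ha hb]]; rewrite /tangent_line => -[hal hbe].
rewrite !dot_ax !dot_pax in hal hbe.
have hs : sgn K = 1 \/ sgn K = -1 by rewrite /sgn; case: (hyp K); [right|left].
have [t1 [t2 t3]] := tan_alg (exprn_gt0 2 ha) (exprn_gt0 2 hb) hs hal hbe.
split => //; split => // hk; apply: t3; by rewrite /sgn hk.
Qed.

Lemma frame_norm (R : realType) (K : central_conic R) (X Y : point R) :
  norm2 (ax K) = 1 ->
  norm2 (psub X Y) = (xc K X - xc K Y) ^+ 2 + (yc K X - yc K Y) ^+ 2.
Proof.
move=> h; have -> : norm2 (psub X Y) = norm2 (psub X Y) * norm2 (ax K) by rewrite h mulr1.
by rewrite /norm2 /xc /yc /dot /psub /perp /=; ring.
Qed.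

Lemma frame_nondeg (R : realType) (K : central_conic R) (A B C : point R) :
  norm2 (ax K) = 1 -> nondegenerate_triangle A B C ->
  (xc K B - xc K A) * (yc K C - yc K A) - (yc K B - yc K A) * (xc K C - xc K A) != 0.
Proof.
move=> h; rewrite /nondegenerate_triangle /=.
have -> : (xc K B - xc K A) * (yc K C - yc K A) - (yc K B - yc K A) * (xc K C - xc K A)
  = ((psub B A).1 * (psub C A).2 - (psub B A).2 * (psub C A).1) * norm2 (ax K).
  by rewrite /norm2 /xc /yc /dot /psub /perp /=; ring.
by rewrite h mulr1.
Qed.

Lemma norm2_ge0 (R : realType) (p : point R) : 0 <= norm2 p.
Proof. by rewrite /norm2 /dot addr_ge0 // -expr2 sqr_ge0. Qed.

Lemma dist_eq (R : realType) (O X Y : point R) :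
  dist O X = dist O Y -> norm2 (psub O X) = norm2 (psub O Y).
Proof. by move/eqP; rewrite eqr_sqrt ?norm2_ge0 // => /eqP. Qed.

Lemma dist_sq (R : realType) (O X : point R) : dist O X ^+ 2 = norm2 (psub O X).
Proof. by rewrite /dist sqr_sqrtr // norm2_ge0. Qed.

Lemma xc_pt (R : realType) (K : central_conic R) (t : R) (d : point R) :
  xc K (padd (ctr K) (pscale t d)) = t * dot d (ax K).
Proof. by rewrite /xc /dot /padd /psub /pscale /=; ring. Qed.

Lemma yc_pt (R : realType) (K : central_conic R) (t : R) (d : point R) :
  yc K (padd (ctr K) (pscale t d)) = t * dot d (perp (ax K)).
Proof. by rewrite /yc /dot /padd /psub /pscale /perp /=; ring. Qed.

Lemma xc_ctr (R : realType) (K : central_conic R) : xc K (ctr K) = 0.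
Proof. by rewrite /xc /dot /psub /=; ring. Qed.

Lemma yc_ctr (R : realType) (K : central_conic R) : yc K (ctr K) = 0.
Proof. by rewrite /yc /dot /psub /perp /=; ring. Qed.

Unset Implicit Arguments.

Theorem lemma2p1 (R : realType) (K : central_conic R) (A B C : point R) :
  wf_conic K ->
  nondegenerate_triangle A B C ->
  circumscribed K A B C ->
  (is_circumcenter (ctr K) A B C ->
     lin_ecc K ^+ 2 < 3 * dist (ctr K) A ^+ 2) /\
  (forall F : point R, is_focus K F -> is_circumcenter F A B C ->
     2 * lin_ecc K < 3 * dist F A).
Proof.
move=> hw hnd [tBC [tCA tAB]].
have hw' := hw; case: hw' => [hax [ha hb]].
have hD := frame_nondeg hax hnd.
have [eBC [cBC oB]] := tangent_unpack hw tBC.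
have [eCA [cCA oC]] := tangent_unpack hw tCA.
have [eAB [cAB oA]] := tangent_unpack hw tAB.
move: eBC eCA eAB cBC cCA cAB oA oB oC hD.
set xA := xc K A; set yA := yc K A; set xB := xc K B; set yB := yc K B.
set xC := xc K C; set yC := yc K C.
set al := sa K ^+ 2; set b2 := sb K ^+ 2.
move=> eBC eCA eAB cBC cCA cAB oA oB oC hD.
have al0 : 0 < al by rewrite /al exprn_gt0.
have b20 : 0 < b2 by rewrite /b2 exprn_gt0.
split.
- move=> [d1 d2].
  have n1 := dist_eq d1; have n2 := dist_eq d2.
  rewrite dist_sq.
  set r := norm2 (psub (ctr K) A) in n1 *.
  rewrite !(frame_norm _ _ hax) xc_ctr yc_ctr in n1 n2.
  have hA : xA ^+ 2 + yA ^+ 2 = r.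
    by rewrite /r (frame_norm _ _ hax) xc_ctr yc_ctr -/xA -/yA; ring.
  rewrite -/xB -/yB -/xC -/yC in n1 n2.
  have hB : xB ^+ 2 + yB ^+ 2 = r by rewrite n1; ring.
  have hC : xC ^+ 2 + yC ^+ 2 = r by rewrite n1 n2; ring.
  have E := coreA eBC eCA eAB cBC cCA cAB hD hA hB hC.
  rewrite /lin_ecc; move: E oA oB; rewrite /sgn; case: (hyp K) => E oA oB.
  + exfalso.
    have : 0 <= (r - (al + -1 * b2)) ^+ 2 by apply: sqr_ge0.
    have : 0 < al * b2 by apply: mulr_gt0.
    lra.
  + rewrite mul1r in E.
    rewrite sqr_sqrtr ?normr_ge0 //.
    have oA' := oA erefl; have oB' := oB erefl.
    have [hle|hlt] := lerP b2 al.
    *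
      by apply: (ellA al0 b20 hle E hA hB) => //; lra.
    *
      apply: (@ellA _ b2 al r yA xA yB xB b20 al0 (ltW hlt)).
      -- lra.
      -- lra.
      -- lra.
      -- lra.
      -- lra.
      -- have -> : yA * xB - yB * xA = - (xA * yB - xB * yA) by ring.
         by rewrite oppr_eq0.
- move=> F hF [d1 d2].
  have n1 := dist_eq d1; have n2 := dist_eq d2.
  set r := norm2 (psub F A) in n1.
  have hc0 : 0 <= lin_ecc K by rewrite /lin_ecc; case: (hyp K); apply: sqrtr_ge0.
  have [t [ht hFt]] : exists t, t ^+ 2 = lin_ecc K ^+ 2 /\
      F = padd (ctr K) (pscale t (focal_dir K)).
    by case: hF => ->; [exists (lin_ecc K) | exists (- lin_ecc K)]; rewrite ?sqrrN.
  have fin : 4 * lin_ecc K ^+ 2 < 9 * r.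
    rewrite -ht.
    rewrite !(frame_norm _ _ hax) in n1 n2.
    have hA' : norm2 (psub F A) = (xc K F - xA) ^+ 2 + (yc K F - yA) ^+ 2
      by rewrite (frame_norm _ _ hax).
    move: hA' n1 n2; rewrite -/r hFt xc_pt yc_pt -/xB -/yB -/xC -/yC.
    rewrite /lin_ecc /focal_dir in ht *.
    move: eBC eCA eAB oA ht; rewrite /sgn.
    case hh: (hyp K) => /= eBC eCA eAB oA ht; rewrite -/al -/b2 in ht.
    + have -> : dot (ax K) (ax K) = 1 by exact: hax.
      have -> : dot (ax K) (perp (ax K)) = 0 by rewrite /dot /perp /=; ring.
      rewrite mulr1 mulr0 => hA n1 n2.
      have hf : t ^+ 2 = al - -1 * b2 by rewrite ht sqr_sqrtr; [ring | lra].
      apply: (coreB hf eBC eCA eAB cBC cCA cAB hD); lra.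
    + rewrite mul1r in eBC eCA eAB.
      case: ifP => hab.
      * have -> : dot (ax K) (ax K) = 1 by exact: hax.
        have -> : dot (ax K) (perp (ax K)) = 0 by rewrite /dot /perp /=; ring.
        rewrite mulr1 mulr0 => hA n1 n2.
        have hle : b2 <= al.
          have h1 : 0 <= sa K - sb K by rewrite subr_ge0.
          have := mulr_ge0 h1 (addr_ge0 (ltW ha) (ltW hb)).
          rewrite /al /b2 => h; lra.
        have hf : t ^+ 2 = al - b2.
          by rewrite ht sqr_sqrtr ?normr_ge0 // ger0_norm ?subr_ge0.
        apply: (coreB hf eBC eCA eAB cBC cCA cAB hD); lra.
      * have -> : dot (perp (ax K)) (ax K) = 0 by rewrite /dot /perp /=; ring.
        have -> : dot (perp (ax K)) (perp (ax K)) = 1.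
          by move: hax; rewrite /norm2 /dot /perp /= => h; rewrite -h; ring.
        rewrite mulr1 mulr0 => hA n1 n2.
        have hlt : al < b2.
          have h1 : 0 < sb K - sa K by rewrite subr_gt0 ltNge hab.
          have := mulr_gt0 h1 (addr_gt0 ha hb).
          rewrite /al /b2 => h; lra.
        have hf : t ^+ 2 = b2 - al.
          by rewrite ht sqr_sqrtr ?normr_ge0 // ltr0_norm ?subr_lt0 // opprB.
        apply: (@coreB _ b2 al t r yA xA yB xB yC xC hf).
        all: try lra.
  have hr0 : 0 <= r by apply: norm2_ge0.
  have hs := sqr_sqrtr hr0.
  have hs0 := sqrtr_ge0 r.
  rewrite /dist -/r.
  rewrite ltNge; apply/negP => H.
  have h1 : 0 <= 2 * lin_ecc K - 3 * Num.sqrt r by rewrite subr_ge0.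
  have h2 : 0 <= 2 * lin_ecc K + 3 * Num.sqrt r by lra.
  have := mulr_ge0 h1 h2.
  lra.
Qed.
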